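(* Let $(\Omega(\mathcal{A}),d)$ be a differential calculus on a complex algebra $\mathcal{A}$ with $\mathcal{E}=\Omega^1(\mathcal{A})$ a finitely generated projective right $\mathcal{A}$-module satisfying: (1) $\mathcal{E}=\mathcal{Z}(\mathcal{E})\otimes_{\mathcal{Z}(\mathcal{A})}\mathcal{A}$; (2) $\mathcal{E}\otimes_{\mathcal{A}}\mathcal{E}=\ker(\wedge)\oplus\mathcal{F}$ with $Q=\wedge|_{\mathcal{F}}:\mathcal{F}\to\Omega^2(\mathcal{A})$ a right $\mathcal{A}$-linear isomorphism; (3) $\sigma(\omega\otimes_{\mathcal{A}}\eta)=\eta\otimes_{\mathcal{A}}\omega$ for all $\omega,\eta\in\mathcal{Z}(\mathcal{E})$. Let $g$ be a pseudo-Riemannian bilinear metric and $\nabla_0$ as in the context. For $\omega,\eta,\theta\in\mathcal{Z}(\mathcal{E})$ define \begin{align*} \psi_{\omega,\theta}(\eta)&=g(\omega\otimes_{\mathcal{A}}dg(\eta\otimes_{\mathcal{A}}\theta))-g(\eta\otimes_{\mathcal{A}}dg(\theta\otimes_{\mathcal{A}}\omega))+g(\theta\otimes_{\mathcal{A}}dg(\omega\otimes_{\mathcal{A}}\eta))\\ &\quad-G_{\eta,\theta}\big((1-\sigma)\nabla_0(\omega)\big)+G_{\omega,\theta}\big((1-\sigma)\nabla_0(\eta)\big)-G_{\eta,\omega}\big((1-\sigma)\nabla_0(\theta)\big). \end{align*} Then $\psi_{\omega,\theta}(\eta)\in\mathcal{Z}(\mathcal{A})$ for all $\omega,\eta,\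theta\in\mathcal{Z}(\mathcal{E})$.
   Context: A differential calculus: $\Omega(\mathcal{A})=\oplus_{j\ge0}\Omega^j(\mathcal{A})$, $\Omega^0=\mathcal{A}$, bimodules $\Omega^j$, an $\mathcal{A}$-bimodule product $\wedge$ adding degrees, $d$ of degree one with $d^2=0$ and the graded Leibniz rule, $\Omega^j$ right-spanned by $da_0\wedge\cdots\wedge da_{j-1}$. $\wedge:\mathcal{E}\otimes_{\mathcal{A}}\mathcal{E}\to\Omega^2(\mathcal{A})$ is the induced product; $P_{\rm sym}$ the idempotent with image $\ker\wedge$ and kernel $\mathcal{F}$; $\sigma=2P_{\rm sym}-1$. $\mathcal{Z}(\mathcal{M})=\{m:am=ma\ \forall a\in\mathcal{A}\}$. A connection is a $\mathbb{C}$-linear $\nabla:\mathcal{E}\to\mathcal{E}\otimes_{\mathcal{A}}\mathcal{E}$ with $\nabla(\omega a)=\nabla(\omega)a+\omega\otimes_{\mathcal{A}}da$. With an idempotent $p\in M_n(\mathcal{A})$, $p(\mathcal{A}^n)=\mathcal{E}$, $\Phi_j=p(e_j)$, $\nabla^{Gr}(\sum_j\Phi_ja_j)=\sum_j\Phi_j\otimes_{\mathcal{A}}da_j$ and $\nabla_0:=\nabla^{Gr}-Q^{-1}\circ(\wedge\circ\nabla^{Gr}+d)$. A pseudo-Riemannian bilinear metric is an $\mathcal{A}$-bimodule map $g:\mathcal{E}\otimes_{\mathcal{A}}\mathcal{E}\to\mathcal{A}$ with $g\circ\sigma=g$ such that $e\mapsto g(e\otimes_{\mathcal{A}}-)$ is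 a right module isomorphism $\mathcal{E}\to\mathrm{Hom}_{\mathcal{A}}(\mathcal{E},\mathcal{A})$. For $\alpha,\beta\in\mathcal{E}$, $G_{\alpha,\beta}:\mathcal{E}\otimes_{\mathcal{A}}\mathcal{E}\to\mathcal{A}$ denotes the (well-defined) map $x\otimes_{\mathcal{A}}y\mapsto g(\alpha\otimes_{\mathcal{A}}x)\,g(\beta\otimes_{\mathcal{A}}y)$, written in the paper as $(g(\alpha\otimes_{\mathcal{A}}-)\otimes_{\mathcal{A}}g(\beta\otimes_{\mathcal{A}}-))$. *)

(* Defs.v *)
From HB Require Import structures.
From mathcomp Require Import all_boot all_order all_algebra.
From mathcomp Require Import reals complex.
Set Implicit Arguments. Unset Strict Implicit. Unset Printing Implicit Defensive.
Import GRing.Theory.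
Local Open Scope ring_scope.

Section Defs.
Variables (K : fieldType) (A : algType K).

Definition additive_map (U W : zmodType) (h : U -> W) :=
  forall u v, h (u + v) = h u + h v.

Definition centralA (c : A) := forall a : A, a * c = c * a.

(* A-bimodules; the K-vector space structure is the one induced by
   K -> A, k |-> k%:A, which acts identically on both sides (K-central). *)
Record bimod := Bimod {
  bm_car :> zmodType;
  lmul : A -> bm_car -> bm_car;
  rmul : bm_car -> A -> bm_car;
  lmulDr : forall a x y, lmul a (x + y) = lmul a x + lmul a y;
  lmulDl : forall a b x, lmul (a + b) x = lmul a x + lmul b x;
  rmulDl : forall a x y, rmul (x + y) a = rmul x a + rmul y a;
  rmulDr : forall a b x, rmul x (a + b) = rmul x a + rmul x b;
  lmulA : forall a b x, lmul (a * b) x = lmul a (lmul b x);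
  rmulA : forall a b x, rmul x (a * b) = rmul (rmul x a) b;
  lmul1 : forall x, lmul 1 x = x;
  rmul1 : forall x, rmul x 1 = x;
  lrmulA : forall a b x, rmul (lmul a x) b = lmul a (rmul x b);
  scal_central : forall (k : K) x, lmul (k%:A) x = rmul x (k%:A)
}.

Definition centralM (M : bimod) (m : M) := forall a : A, lmul a m = rmul m a.

Definition balanced (M N : bimod) (W : zmodType) (f : M -> N -> W) :=
  [/\ forall x x' y, f (x + x') y = f x y + f x' y,
      forall x y y', f x (y + y') = f x y + f x y'
    & forall x a y, f (rmul x a) y = f x (lmul a y)].

(* The tensor product M (x)_A N of bimodules, given by its universal property
   (for balanced biadditive maps into abelian groups), together with its
   induced bimodule structure. *)
Record tensor (M N : bimod) := Tensor {
  tn_car :> bimod;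
  tens : M -> N -> tn_car;
  tens_bal : balanced tens;
  tens_lmul : forall a x y, lmul a (tens x y) = tens (lmul a x) y;
  tens_rmul : forall a x y, rmul (tens x y) a = tens x (rmul y a);
  tens_lift : forall W : zmodType, (M -> N -> W) -> tn_car -> W;
  tens_liftP : forall (W : zmodType) (f : M -> N -> W), balanced f ->
      additive_map (tens_lift f) /\ (forall x y, tens_lift f (tens x y) = f x y);
  tens_uniq : forall (W : zmodType) (h1 h2 : tn_car -> W),
      additive_map h1 -> additive_map h2 ->
      (forall x y, h1 (tens x y) = h2 (tens x y)) -> forall t, h1 t = h2 t
}.

(* A differential calculus, truncated at degree 2 (only Omega^0 = A,
   Omega^1, Omega^2 enter the statement; any such truncated calculus extends
   to a full one by Omega^j = 0 for j >= 3). *)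
Record calculus := Calculus {
  Om1 : bimod;
  Om2 : bimod;
  d0 : A -> Om1;
  d1 : Om1 -> Om2;
  wedge : Om1 -> Om1 -> Om2;
  d0_lin : forall (k : K) a b, d0 (k *: a + b) = lmul (k%:A) (d0 a) + d0 b;
  d1_lin : forall (k : K) x y, d1 (lmul (k%:A) x + y) = lmul (k%:A) (d1 x) + d1 y;
  wedge_bal : balanced wedge;
  wedge_lmul : forall a x y, lmul a (wedge x y) = wedge (lmul a x) y;
  wedge_rmul : forall a x y, rmul (wedge x y) a = wedge x (rmul y a);
  d0M : forall a b, d0 (a * b) = rmul (d0 a) b + lmul a (d0 b);
  d1_rmul : forall x a, d1 (rmul x a) = rmul (d1 x) a - wedge x (d0 a);
  d1_lmul : forall a x, d1 (lmul a x) = wedge (d0 a) x + lmul a (d1 x);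
  d1d0 : forall a, d1 (d0 a) = 0;
  span1 : forall x : Om1, exists s : seq (A * A),
      x = \sum_(q <- s) rmul (d0 q.1) q.2;
  span2 : forall w : Om2, exists s : seq (A * A * A),
      w = \sum_(q <- s) rmul (wedge (d0 q.1.1) (d0 q.1.2)) q.2
}.

Section Calc.
Variables (Om : calculus) (T : tensor (Om1 Om) (Om1 Om)).

Definition wedgeT : T -> Om2 Om := @tens_lift _ _ T _ (@wedge Om).

(* Omega^1 = p A^n as right A-modules, for an idempotent p in M_n(A):
   coord is a right A-linear bijection from Omega^1 onto p A^n (column vectors
   'I_n -> A), and Phi j = p(e_j) is the element with coordinates p(e_j). *)
Definition proj_presentation (n : nat) (p : 'M[A]_n)
    (coord : Om1 Om -> 'I_n -> A) (Phi : 'I_n -> Om1 Om) :=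
  [/\ p *m p = p,
      forall x y j, coord (x + y) j = coord x j + coord y j,
      forall x a j, coord (rmul x a) j = coord x j * a,
      forall x y, coord x =1 coord y -> x = y
    & [/\ forall x j, \sum_k p j k * coord x k = coord x j,
      forall v : 'I_n -> A, (forall j, \sum_k p j k * v k = v j) ->
         exists x, coord x =1 v
    & forall j k, coord (Phi j) k = p k j]].

Definition nablaGr n (coord : Om1 Om -> 'I_n -> A) (Phi : 'I_n -> Om1 Om)
    (x : Om1 Om) : T :=
  \sum_(j < n) tens T (Phi j) (d0 Om (coord x j)).

(* E (x)_A E = ker(wedge) (+) F with Q = wedge|_F an isomorphism onto Omega^2
   (F a right A-submodule); Qinv is the inverse of Q. *)
Definition splitting (F : pred T) (Qinv : Om2 Om -> T) :=
  [/\ 0 \in F,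
      forall t u, t \in F -> u \in F -> t + u \in F,
      forall t a, t \in F -> rmul t a \in F,
      forall t, t \in F -> wedgeT t = 0 -> t = 0
    & forall w, Qinv w \in F /\ wedgeT (Qinv w) = w].

(* P_sym : idempotent with image ker(wedge) and kernel F; sigma = 2 P_sym - 1 *)
Definition Psym (Qinv : Om2 Om -> T) (t : T) : T := t - Qinv (wedgeT t).
Definition sigma (Qinv : Om2 Om -> T) (t : T) : T := Psym Qinv t *+ 2 - t.

Definition nabla0 n coord Phi (Qinv : Om2 Om -> T) (x : Om1 Om) : T :=
  @nablaGr n coord Phi x - Qinv (wedgeT (@nablaGr n coord Phi x) + d1 x).

(* hypothesis (1): E = Z(E) (x)_{Z(A)} A, i.e. the multiplication map
   Z(E) (x)_{Z(A)} A -> E, z (x) a |-> z a, is an isomorphism; stated as the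
   universal property of the tensor product over Z(A) for that map. *)
Definition central_generated :=
  forall (W : zmodType) (f : Om1 Om -> A -> W),
    (forall z z' a, centralM z -> centralM z' -> f (z + z') a = f z a + f z' a) ->
    (forall z a a', centralM z -> f z (a + a') = f z a + f z a') ->
    (forall z c a, centralM z -> centralA c -> f (rmul z c) a = f z (c * a)) ->
    exists h : Om1 Om -> W,
      [/\ additive_map h,
          forall z a, centralM z -> h (rmul z a) = f z a
        & forall h' : Om1 Om -> W, additive_map h' ->
            (forall z a, centralM z -> h' (rmul z a) = f z a) ->
            forall x, h' x = h x].

Definition pr_metric (Qinv : Om2 Om -> T) (g : T -> A) :=
  [/\ additive_map g,
      forall a t, g (lmul a t) = a * g t,
      forall t a, g (rmul t a) = g t * a
    & [/\ forall t, g (sigma Qinv t) = g t,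
      forall e, (forall y, g (tens T e y) = 0) -> e = 0
    & forall phi : Om1 Om -> A, additive_map phi ->
        (forall y a, phi (rmul y a) = phi y * a) ->
        exists e, forall y, g (tens T e y) = phi y]].

Definition Gmap (g : T -> A) (al be : Om1 Om) : T -> A :=
  @tens_lift _ _ T _ (fun x y => g (tens T al x) * g (tens T be y)).

Definition psi n coord Phi Qinv (g : T -> A) (om th et : Om1 Om) : A :=
  let N := @nabla0 n coord Phi Qinv in
  let S := fun t => t - sigma Qinv t in
    g (tens T om (d0 Om (g (tens T et th))))
  - g (tens T et (d0 Om (g (tens T th om))))
  + g (tens T th (d0 Om (g (tens T om et))))
  - Gmap g et th (S (N om))
  + Gmap g om th (S (N et))
  - Gmap g et om (S (N th)).

End Calc.
End Defs.

(* Main.v *)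
Require Import Defs.
From HB Require Import structures.
From mathcomp Require Import all_boot all_order all_algebra.
From mathcomp Require Import reals complex.
Import GRing.Theory.
Local Open Scope ring_scope.

Lemma am0 {U W : zmodType} {h : U -> W} : additive_map h -> h 0 = 0.
Proof. move=> H; have e := H 0 0; rewrite addr0 in e.
by apply: (addrI (h 0)); rewrite addr0 -e. Qed.
Lemma amN {U W : zmodType} {h : U -> W} : additive_map h -> forall x, h (- x) = - h x.
Proof. move=> H x; apply: (addrI (h x)); by rewrite -H !subrr am0. Qed.
Lemma amB {U W : zmodType} {h : U -> W} : additive_map h -> forall x y, h (x - y) = h x - h y.
Proof. by move=> H x y; rewrite H amN. Qed.
Lemma am2 {U W : zmodType} {h : U -> W} : additive_map h -> forall x, h (x *+ 2) = h x *+ 2.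
Proof. by move=> H x; rewrite !mulr2n H. Qed.

Lemma lmul_am {K : fieldType} {A : algType K} {M : bimod A} (a : A) : additive_map (@lmul _ _ M a).
Proof. by move=> x y; rewrite lmulDr. Qed.
Lemma rmul_am {K : fieldType} {A : algType K} {M : bimod A} (a : A) : additive_map (fun x : M => rmul x a).
Proof. by move=> x y; rewrite rmulDl. Qed.
Lemma rmul_amr {K : fieldType} {A : algType K} {M : bimod A} (x : M) : additive_map (fun a : A => rmul x a).
Proof. by move=> a b; rewrite rmulDr. Qed.
Lemma rmulN1 {K : fieldType} {A : algType K} {M : bimod A} (x : M) : rmul x (-1) = - x.
Proof. by rewrite (amN (rmul_amr x)) rmul1. Qed.

Lemma centralA_B {K : fieldType} {A : algType K} (x y : A) :
  centralA x -> centralA y -> centralA (x - y).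
Proof. by move=> hx hy a; rewrite mulrBr mulrBl hx hy. Qed.
Lemma centralA_D {K : fieldType} {A : algType K} (x y : A) :
  centralA x -> centralA y -> centralA (x + y).
Proof. by move=> hx hy a; rewrite mulrDr mulrDl hx hy. Qed.

Lemma cg_ext {K : fieldType} {A : algType K} {Om : calculus A} :
  central_generated Om -> forall (W : zmodType) (h1 h2 : Om1 Om -> W),
  additive_map h1 -> additive_map h2 ->
  (forall z a, centralM z -> h1 (rmul z a) = h2 (rmul z a)) -> forall x, h1 x = h2 x.
Proof.
move=> CG W h1 h2 a1 a2 e x.
have [] := CG W (fun z a => h1 (rmul z a)).
- by move=> z z' a _ _; rewrite rmulDl a1.
- by move=> z a a' _; rewrite rmulDr a1.
- by move=> z c a _ _; rewrite rmulA.
move=> h [ha hz hu].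
rewrite (hu h1 a1) ?(hu h2 a2) // => z a cz; by rewrite e.
Qed.

Lemma lmulN' {K : fieldType} {A : algType K} {M : bimod A} (a : A) (x : M) : lmul a (- x) = - lmul a x.
Proof. exact: (amN (lmul_am a)). Qed.
Lemma lmulB' {K : fieldType} {A : algType K} {M : bimod A} (a : A) (x y : M) : lmul a (x - y) = lmul a x - lmul a y.
Proof. exact: (amB (lmul_am a)). Qed.
Lemma lmul2n {K : fieldType} {A : algType K} {M : bimod A} (a : A) (x : M) : lmul a (x *+ 2) = lmul a x *+ 2.
Proof. exact: (am2 (lmul_am a)). Qed.
Lemma rmulN' {K : fieldType} {A : algType K} {M : bimod A} (a : A) (x : M) : rmul (- x) a = - rmul x a.
Proof. exact: (amN (rmul_am a)). Qed.
Lemma rmulB' {K : fieldType} {A : algType K} {M : bimod A} (a : A) (x y : M) : rmul (x - y) a = rmul x a - rmul y a.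
Proof. exact: (amB (rmul_am a)). Qed.
Lemma rmul2n {K : fieldType} {A : algType K} {M : bimod A} (a : A) (x : M) : rmul (x *+ 2) a = rmul x a *+ 2.
Proof. exact: (am2 (rmul_am a)). Qed.
Lemma rmul0' {K : fieldType} {A : algType K} {M : bimod A} (a : A) : rmul (0 : M) a = 0.
Proof. exact: (am0 (rmul_am a)). Qed.

Theorem lemma6p8 (R : realType) (A : algType R[i]) (Om : calculus A)
    (T : tensor (Om1 Om) (Om1 Om))
    (n : nat) (p : 'M[A]_n) (coord : Om1 Om -> 'I_n -> A) (Phi : 'I_n -> Om1 Om)
    (F : pred T) (Qinv : Om2 Om -> T) (g : T -> A) :
  proj_presentation p coord Phi ->
  central_generated Om ->
  splitting F Qinv ->
  (forall om et, centralM om -> centralM et ->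
     sigma Qinv (tens T om et) = tens T et om) ->
  pr_metric Qinv g ->
  forall om et th : Om1 Om, centralM om -> centralM et -> centralM th ->
    centralA (psi coord Phi Qinv g om th et).
Proof.
move=> _ CG [F0 FD FR Finj FQ] Hsig [gA gL gR _] om et th com cet cth.
have wA : additive_map (@wedgeT _ _ Om T) := (tens_liftP T (wedge_bal Om)).1.
have wT : forall x y, @wedgeT _ _ Om T (tens T x y) = wedge x y := (tens_liftP T (wedge_bal Om)).2.
have [bD1 bD2 bB] := tens_bal T.
have [wD1 wD2 wB] := wedge_bal Om.
have wR : forall (t : T) (a : A), wedgeT (rmul t a) = rmul (wedgeT t) a.
  move=> t a; apply: (@tens_uniq _ _ _ _ T _ (fun t => wedgeT (rmul t a))
                       (fun t => rmul (wedgeT t) a) _ _ _ t).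
  - by move=> x y; rewrite rmulDl wA.
  - by move=> x y; rewrite wA rmulDl.
  - by move=> x y; rewrite tens_rmul !wT wedge_rmul.
have wL : forall (a : A) (t : T), wedgeT (lmul a t) = lmul a (wedgeT t).
  move=> a t; apply: (@tens_uniq _ _ _ _ T _ (fun t => wedgeT (lmul a t))
                       (fun t => lmul a (wedgeT t)) _ _ _ t).
  - by move=> x y; rewrite lmulDr wA.
  - by move=> x y; rewrite wA lmulDr.
  - by move=> x y; rewrite tens_lmul !wT wedge_lmul.
have FN : forall t, t \in F -> - t \in F.
  by move=> t Ht; rewrite -rmulN1; apply: FR.
have Qeq : forall t u, t \in F -> u \in F -> wedgeT t = wedgeT u -> t = u.
  move=> t u Ht Hu e; apply/eqP; rewrite -subr_eq0; apply/eqP/Finj.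
    by apply: FD => //; apply: FN.
  by rewrite (amB wA) e subrr.
have QA : additive_map Qinv.
  move=> w w'; apply: Qeq; first by case: (FQ (w + w')).
    by apply: FD; [case: (FQ w)|case: (FQ w')].
  by rewrite wA; case: (FQ w) => _ ->; case: (FQ w') => _ ->; case: (FQ (w+w')) => _ ->.
have QR : forall w a, Qinv (rmul w a) = rmul (Qinv w) a.
  move=> w a; apply: Qeq; first by case: (FQ (rmul w a)).
    by apply: FR; case: (FQ w).
  by rewrite wR; case: (FQ w) => _ ->; case: (FQ (rmul w a)) => _ ->.
have sigE : forall t : T, sigma Qinv t = t - Qinv (wedgeT t) *+ 2.
  move=> t; rewrite /sigma /Psym mulr2n mulr2n.
  by rewrite addrAC addrA subrK opprD addrA.
have wsig : forall t : T, wedgeT (sigma Qinv t) = - wedgeT t.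
  move=> t; rewrite sigE (amB wA) (am2 wA); case: (FQ (wedgeT t)) => _ ->.
  by rewrite mulr2n opprD addrA subrr add0r.
have sigA : additive_map (sigma Qinv).
  by move=> t u; rewrite !sigE wA QA mulrnDl opprD addrACA.
have sigR : forall (t : T) (a : A), sigma Qinv (rmul t a) = rmul (sigma Qinv t) a.
  by move=> t a; rewrite !sigE wR QR rmulB' rmul2n.
have ccomm : forall c : A, centralA c -> forall x : Om1 Om, lmul c x = rmul x c.
  move=> c cc; apply: (@cg_ext _ _ Om CG _ (lmul c) (fun x => rmul x c)).
  - exact: lmul_am.
  - exact: rmul_am.
  - by move=> z a cz; rewrite -lrmulA cz -!rmulA cc.
have wanti : forall o : Om1 Om, centralM o -> forall x : Om1 Om, wedge o x = - wedge x o.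
  move=> o co x; apply/eqP; rewrite -addr_eq0; apply/eqP.
  move: x; apply: (@cg_ext _ _ Om CG _ (fun x => wedge o x + wedge x o) (fun _ => 0)).
  - by move=> x y; rewrite wD2 wD1 addrACA.
  - by move=> x y; rewrite addr0.
  - move=> z a cz; rewrite -wedge_rmul wB co -wedge_rmul -rmulDl -!wT.
    by rewrite -(Hsig o z co cz) wsig subrr rmul0'.
have dcent : forall o : Om1 Om, centralM o -> forall a : A, lmul a (d1 o) = rmul (d1 o) a.
  move=> o co a; have e1 := d1_lmul a o; have e2 := d1_rmul o a.
  rewrite co e2 (wanti o co) opprK addrC in e1.
  symmetry; exact: (addrI _ e1).
have d0cent : forall c : A, centralA c -> forall a : A, lmul a (d0 Om c) = rmul (d0 Om c) a.
  move=> c cc a; have e := d0M Om a c.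
  rewrite cc d0M (ccomm c cc (d0 Om a)) addrC in e.
  symmetry; exact: (addrI _ e).
have tcent : forall x y : Om1 Om, centralM x -> centralM y -> centralM (tens T x y).
  by move=> x y cx cy a; rewrite tens_lmul cx bB cy tens_rmul.
have gcent : forall t : T, centralM t -> centralA (g t).
  by move=> t ct a; rewrite -gL ct gR.
have sigL : forall (a : A) (t : T), sigma Qinv (lmul a t) = lmul a (sigma Qinv t).
  move=> a t; apply: (@tens_uniq _ _ _ _ T _ (fun t => sigma Qinv (lmul a t))
     (fun t => lmul a (sigma Qinv t)) _ _ _ t).
  - by move=> u v; rewrite lmulDr sigA.
  - by move=> u v; rewrite sigA lmulDr.
  have H1 : forall z : Om1 Om, centralM z -> forall y : Om1 Om,
      sigma Qinv (lmul a (tens T z y)) = lmul a (sigma Qinv (tens T z y)).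
    move=> z cz; apply: (@cg_ext _ _ Om CG _ (fun y => sigma Qinv (lmul a (tens T z y)))
       (fun y => lmul a (sigma Qinv (tens T z y)))).
    - by move=> u v; rewrite bD2 lmulDr sigA.
    - by move=> u v; rewrite bD2 sigA lmulDr.
    move=> z' b cz'; rewrite -tens_rmul -lrmulA (tcent _ _ cz cz') !sigR Hsig //.
    by rewrite -lrmulA (tcent _ _ cz' cz).
  move=> x y; apply: (@cg_ext _ _ Om CG _ (fun x => sigma Qinv (lmul a (tens T x y)))
     (fun x => lmul a (sigma Qinv (tens T x y)))).
  - by move=> u v; rewrite bD1 lmulDr sigA.
  - by move=> u v; rewrite bD1 sigA lmulDr.
  by move=> z b cz; rewrite bB H1.
have Qcent : forall w : Om2 Om, (forall a : A, lmul a w = rmul w a) -> centralM (Qinv w *+ 2).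
  move=> w cw a.
  have e := sigL a (Qinv w).
  rewrite !sigE wL (proj2 (FQ w)) cw QR lmulB' lmul2n in e.
  move/addrI/oppr_inj in e.
  by rewrite lmul2n rmul2n e.
have Sform : forall t : T, t - sigma Qinv t = Qinv (wedgeT t) *+ 2.
  by move=> t; rewrite sigE opprB addrC subrK.
have Nw : forall o : Om1 Om, centralM o -> forall a : A,
    lmul a (wedgeT (nabla0 coord Phi Qinv o)) = rmul (wedgeT (nabla0 coord Phi Qinv o)) a.
  move=> o co a.
  have Ne : wedgeT (nabla0 coord Phi Qinv o) = - d1 o.
    rewrite /nabla0 (amB wA); case: (FQ (wedgeT (nablaGr T coord Phi o) + d1 o)) => _ ->.
    by rewrite opprD addrA subrr add0r.
  by rewrite Ne lmulN' rmulN' dcent.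
have Gcent : forall al be : Om1 Om, centralM al -> centralM be ->
    forall v : T, centralM v -> centralA (Gmap g al be v).
  move=> al be cal cbe.
  have bal : balanced (fun x y => g (tens T al x) * g (tens T be y)).
    split.
    - by move=> x x' y /=; rewrite bD2 gA mulrDl.
    - by move=> x y y' /=; rewrite bD2 gA mulrDr.
    move=> x b y /=; rewrite -tens_rmul gR -mulrA; congr (_ * _).
    by rewrite -bB -cbe -tens_lmul gL.
  have GA : additive_map (Gmap g al be) := (tens_liftP T bal).1.
  have GT : forall x y, Gmap g al be (tens T x y) = g (tens T al x) * g (tens T be y)
    := (tens_liftP T bal).2.
  have GL : forall (a : A) (t : T), Gmap g al be (lmul a t) = a * Gmap g al be t.
    move=> a t; apply: (@tens_uniq _ _ _ _ T _ (fun t => Gmap g al be (lmul a t))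
       (fun t => a * Gmap g al be t) _ _ _ t).
    - by move=> u v; rewrite lmulDr GA.
    - by move=> u v; rewrite GA mulrDr.
    by move=> x y; rewrite tens_lmul !GT -bB -cal -tens_lmul gL mulrA.
  have GR : forall (a : A) (t : T), Gmap g al be (rmul t a) = Gmap g al be t * a.
    move=> a t; apply: (@tens_uniq _ _ _ _ T _ (fun t => Gmap g al be (rmul t a))
       (fun t => Gmap g al be t * a) _ _ _ t).
    - by move=> u v; rewrite rmulDl GA.
    - by move=> u v; rewrite GA mulrDl.
    by move=> x y; rewrite tens_rmul !GT -tens_rmul gR mulrA.
  by move=> v cv a; rewrite -GL cv GR.
rewrite /psi; cbv beta zeta.
repeat (apply: centralA_B || apply: centralA_D).
- apply: (gcent); apply: (tcent) => //; apply: (d0cent); apply: (gcent); exact: (tcent).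
- apply: (gcent); apply: (tcent) => //; apply: (d0cent); apply: (gcent); exact: (tcent).
- apply: (gcent); apply: (tcent) => //; apply: (d0cent); apply: (gcent); exact: (tcent).
- apply: (Gcent) => //; rewrite Sform; apply: (Qcent); exact: (Nw).
- apply: (Gcent) => //; rewrite Sform; apply: (Qcent); exact: (Nw).
- apply: (Gcent) => //; rewrite Sform; apply: (Qcent); exact: (Nw).
Qed.
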